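(* For every positive integer $k$ there is an edge-coloured digraph $D_k$ with two vertices $u,v$ such that: (I) for every set $S$ of $k$ colours there is a rainbow path from $u$ to $v$ with no edge of colour in $S$; and (II) any two rainbow paths from $u$ to $v$ in $D_k$ have a common edge.
   Context: A path is a sequence of distinct vertices with consecutive vertices joined by directed edges; in an edge-coloured digraph it is rainbow if its edges have pairwise distinct colours. *)

(* Defs.v *)
From mathcomp Require Import all_boot.
Set Implicit Arguments. Unset Strict Implicit. Unset Printing Implicit Defensive.

(* A (simple) digraph on a finite vertex type V is an arc relation E : rel V;
   an edge-colouring assigns to each arc (x, y) the colour col x y : nat
   (values of col on non-arcs are irrelevant). *)

Definition is_dpath (V : finType) (E : rel V) (u v : V) (p : seq V) : bool :=
  match p with
  | [::] => false
  | x :: s => [&& x == u, last x s == v, path E x s & uniq p]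
  end.

Definition path_edges (V : finType) (p : seq V) : seq (V * V) :=
  zip p (behead p).

Definition path_colours (V : finType) (col : V -> V -> nat) (p : seq V)
  : seq nat := map (fun e => col e.1 e.2) (path_edges p).

Definition rainbow (V : finType) (col : V -> V -> nat) (p : seq V) : bool :=
  uniq (path_colours col p).

(* Main.v *)
Require Import Defs.
From mathcomp Require Import all_boot zify.
Set Implicit Arguments. Unset Strict Implicit. Unset Printing Implicit Defensive.

Notation NN m := (2 * m + 3).

Definition V (m : nat) : finType := ('I_(NN m).+1 + 'I_(NN m).+1 * 'I_m.+1)%type.

Definition E m : rel (V m) := fun x y =>
  match x, y with
  | inl a, inl b => val b == (val a).+1
  | inl a, inr jc => (val jc.1 == val a) && (val a < NN m)
  | inr jc, inl b => val b == (val jc.1).+1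
  | inr _, inr _ => false
  end.

Definition col m (x y : V m) : nat :=
  match x with
  | inl a => match y with inl _ => val a | inr jc => NN m + 2 * val jc.2 end
  | inr jc => NN m + 2 * val jc.2 + 1
  end.

Definition level m (x : V m) : nat :=
  match x with inl a => 2 * val a | inr jc => (2 * val jc.1).+1 end.

Definition xv m (a : nat) : V m := inl (inord a).
Definition yv m (j c : nat) : V m := inr (inord j, inord c).

Lemma level_arc m (x y : V m) : E x y -> level y = level x + 1 + (col x y < NN m).
Proof.
case: x => [a|[j c]]; case: y => [b|[j' c']] //=.
- move/eqP=> hb; have := ltn_ord b; lia.
- move/andP=> [/eqP hj ha]; lia.
- move/eqP=> hb; lia.
Qed.

Lemma col_arc m (x y : V m) : E x y -> col x y < NN m + 2 * m + 2.
Proof.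
case: x => [a|[j c]]; case: y => [b|[j' c']] //=.
- move=> _; have := ltn_ord a; lia.
- move=> _; have := ltn_ord c'; lia.
- move=> _; have := ltn_ord c; lia.
Qed.

Lemma arc_special m (x y : V m) : E x y -> col x y < NN m ->
  x = inl (inord (col x y)) /\ y = inl (inord (col x y).+1).
Proof.
case: x => [a|[j c]]; case: y => [b|[j' c']] //=; try lia.
move/eqP=> hb _; split; first by rewrite inord_val.
by rewrite -hb inord_val.
Qed.

Lemma pc_cons m (x y : V m) s :
  path_colours (@col m) (x :: y :: s) = col x y :: path_colours (@col m) (y :: s).
Proof. by []. Qed.

Lemma arith1 (a b s c : nat) : a + 1 + b + s + c = a + s.+1 + (b + c).
Proof. lia. Qed.

Lemma level_path m (x : V m) s : path (@E m) x s ->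
  level (last x s) = level x + size s + count (fun c => c < NN m) (path_colours (@col m) (x :: s)).
Proof.
elim: s x => [|y s IH] x; first by move=> _; rewrite /path_colours /path_edges /=; lia.
move=> /andP [hxy hp]; rewrite pc_cons /= (IH _ hp) (level_arc hxy);
exact: arith1.
Qed.

Lemma arcs_path m (x : V m) s e : path (@E m) x s -> e \in path_edges (x :: s) -> E e.1 e.2.
Proof.
elim: s x => [|y s IH] x //=.
move=> /andP [hxy hp]; rewrite /path_edges /= inE => /orP [/eqP -> //|].
exact: IH.
Qed.

Lemma size_pc m (x : V m) s : size (path_colours (@col m) (x :: s)) = size s.
Proof. by rewrite /path_colours /path_edges size_map size_zip /=; lia. Qed.

Lemma mem_pc m (x : V m) s c : path (@E m) x s -> c \in path_colours (@col m) (x :: s) ->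
  exists2 e, e \in path_edges (x :: s) & (E e.1 e.2 /\ c = col e.1 e.2).
Proof.
move=> hp /mapP [e he ->]; exists e => //; split => //; exact: arcs_path hp he.
Qed.

Lemma many_special m (x : V m) s : path (@E m) x s -> x = @xv m 0 -> last x s = @xv m (NN m) ->
  uniq (path_colours (@col m) (x :: s)) ->
  m.+2 <= count (fun c => c < NN m) (path_colours (@col m) (x :: s)).
Proof.
move=> hp hx hl hu.
have hlev := level_path hp.
have h0 : level x = 0 by rewrite hx /= inordK.
have hn : level (last x s) = 2 * NN m by rewrite hl /= inordK.
set L := path_colours (@col m) (x :: s) in hu hlev *.
have hs : size L = size s by rewrite /L size_pc.
have hc := count_predC (fun c => c < NN m) L.
have hb : count (predC (fun c => c < NN m)) L <= 2 * m + 2.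
  rewrite -size_filter.
  have -> : 2 * m + 2 = size (iota (NN m) (2 * m + 2)) by rewrite size_iota.
  apply: uniq_leq_size; first exact: filter_uniq.
  move=> c; rewrite mem_filter /= mem_iota => /andP [hc1 hc2].
  move: hc1; have [e _ [he ->]] := mem_pc hp hc2.
  have := col_arc he; lia.
lia.
Qed.

Lemma arith2 m a b : m.+1 < a -> m.+1 < b -> a + b <= NN m -> False.
Proof. lia. Qed.

Lemma partII m (p q : seq (V m)) :
  is_dpath (@E m) (xv m 0) (xv m (NN m)) p -> rainbow (@col m) p ->
  is_dpath (@E m) (xv m 0) (xv m (NN m)) q -> rainbow (@col m) q ->
  has (fun e => e \in path_edges q) (path_edges p).
Proof.
case: p => [|x s] //; case: q => [|y t] //=.
case/and4P => /eqP hx /eqP hl hp _ hr; case/and4P => /eqP hy /eqP hl' hq _ hr'.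
have c1 := many_special hp hx hl hr.
have c2 := many_special hq hy hl' hr'.
set Lp := path_colours (@col m) (x :: s) in hr c1.
set Lq := path_colours (@col m) (y :: t) in hr' c2.
have /hasP [a ha1 ha2] : has (fun a => a \in [seq c <- Lq | c < NN m]) [seq c <- Lp | c < NN m].
  apply/negPn/negP => hn.
  have hu : uniq ([seq c <- Lp | c < NN m] ++ [seq c <- Lq | c < NN m]).
    by rewrite cat_uniq !filter_uniq //= andbT has_sym.
  have := uniq_leq_size hu (_ : {subset _ <= iota 0 (NN m)}).
  rewrite size_cat !size_filter size_iota.
  have H : (forall x, x \in [seq c <- Lp | c < NN m] ++ [seq c <- Lq | c < NN m] -> x \in iota 0 (NN m)).
    by move=> z; rewrite mem_cat !mem_filter mem_iota; case/orP => /andP [-> _].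
  move/(_ H); exact: (arith2 c1 c2).
rewrite mem_filter in ha1; rewrite mem_filter in ha2.
case/andP: ha1 => han hap; case/andP: ha2 => _ haq.
have [e he [hE hc]] := mem_pc hp hap.
have [e' he' [hE' hc']] := mem_pc hq haq.
apply/hasP; exists e => //.
have hlt : col e.1 e.2 < NN m by rewrite -hc.
have [h1 h2] := arc_special hE hlt.
have hlt' : col e'.1 e'.2 < NN m by rewrite -hc'.
have [h1' h2'] := arc_special hE' hlt'.
rewrite -hc in h1 h2; rewrite -hc' in h1' h2'.
have -> : e = e'.
  by case: e h1 h2 {he hE hc hlt} => a1 a2 /= -> ->; case: e' h1' h2' {he' hE' hc' hlt'} => b1 b2 /= -> ->; done.
exact: he'.
Qed.

Definition Qc m (S : seq nat) i (A : seq nat) (c : nat) : bool :=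
  (c \notin S) && (if c < NN m then i <= c
                   else has (fun c' => (c == NN m + 2 * c') || (c == NN m + 2 * c' + 1)) A).

Lemma notin_level m (x : V m) (s : seq (V m)) lo : (forall y, y \in s -> lo < level y) -> level x <= lo -> x \notin s.
Proof. move=> H hx; apply/negP => /H; lia. Qed.

Ltac clia := repeat match goal with
  | H : is_true (path _ _ _) |- _ => clear H
  | H : last _ _ = _ |- _ => clear H
  | H : is_true (uniq _) |- _ => clear H
  | H : is_true (all _ _) |- _ => clear H
  | H : forall _, _ |- _ => clear H
  end; lia.

Lemma build m (S : seq nat) : forall r i (A : seq nat), i + r = NN m -> uniq A ->
  (forall c, c \in A -> [&& c < m.+1, NN m + 2 * c \notin S & NN m + 2 * c + 1 \notin S]) ->
  count (fun j => j \in S) (iota i r) <= size A ->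
  exists s, [/\ path (@E m) (xv m i) s, last (xv m i) s = xv m (NN m),
    uniq (xv m i :: s), all (fun y => 2 * i < level y) s &
    uniq (path_colours (@col m) (xv m i :: s)) /\
    all (Qc m S i A) (path_colours (@col m) (xv m i :: s))].
Proof.
elim=> [|r IH] i A.
  rewrite addn0 => -> _ _ _; exists [::]; split => //.
move=> hir hA hAc; rewrite /= => hcnt.
have hi : i < NN m by clia.
case: (boolP (i \in S)) => iS.
- case: A hA hAc hcnt => [|c A'] hA hAc hcnt; first by rewrite iS in hcnt.
  have /and3P [hc hcS1 hcS2] := hAc c (mem_head _ _).
  case/andP: hA => hcA' hA'.
  have hcnt' : count (fun j => j \in S) (iota i.+1 r) <= size A'.
    by move: hcnt; rewrite iS /= add1n ltnS.
  have [s [hp hl hu hlev [hcu hcq]]] := IH i.+1 A' (ltac:(clia)) hA'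
    (fun c' h => hAc c' (ltac:(by rewrite inE h orbT))) (ltac:(rewrite iS in hcnt; simpl in hcnt; clia)).
  have hlevs : forall y, y \in xv m i.+1 :: s -> 2 * i.+1 <= level y.
    move=> y; rewrite inE => /orP [/eqP -> /=|hy]; first by rewrite inordK //; clia.
    by move/allP: hlev => /(_ y hy); clia.
  exists (yv m i c :: xv m i.+1 :: s); split.
  + rewrite /= hp !inordK ?eqxx //; clia.
  + done.
  + rewrite /= andbA; apply/andP; split; last first.
      by move: hu; rewrite /= => ->.
    apply/andP; split.
      apply: (notin_level (lo := 2 * i)) => //=; last by rewrite inordK //; clia.
      move=> y; rewrite inE => /orP [/eqP -> /=|]; first by rewrite !inordK //; clia.
      by move=> hy; have := hlevs y hy; clia.
    apply: (notin_level (lo := (2 * i).+1)) => //=; last by rewrite inordK //; clia.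
    by move=> y hy; have := hlevs y hy; clia.
  + rewrite /= !inordK //; [|clia]; rewrite (sub_all _ hlev) ?andbT; first by clia.
    by move=> y /=; clia.
  + rewrite !pc_cons /= !inordK //.
    have hnot : forall d, d \in path_colours (@col m) (xv m i.+1 :: s) ->
        (d != NN m + 2 * c) && (d != NN m + 2 * c + 1).
      move=> d hd; move/allP: hcq => /(_ d hd) /andP [_].
      case: ifP => hdn; first by clia.
      case/hasP => c' hc' hd'.
      case: (eqVneq c' c) => [ec|nec]; first by move: hcA'; rewrite -ec hc'.
      move/eqP: nec => nec.
      case/orP: hd' => /eqP hd'; apply/andP; split; apply/eqP; clia.
    split.
      rewrite /= hcu andbT inE negb_or; apply/andP; split; first (apply/andP; split).
      * clia.
      * by apply/negP => /hnot /andP [/eqP].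
      * by apply/negP => /hnot /andP [_ /eqP].
    rewrite /= /Qc hcS1 hcS2 /=.
    have -> : (NN m + 2 * c < NN m) = false by clia.
    have -> : (NN m + 2 * c + 1 < NN m) = false by clia.
    rewrite /= !eqxx /= orbT /=.
    apply/allP => d hd; move/allP: hcq => /(_ d hd) /andP [-> /=].
    case: ifP => _; first by clia.
    by move=> h; rewrite h orbT.
- have [s [hp hl hu hlev [hcu hcq]]] := IH i.+1 A (ltac:(clia)) hA hAc
    (ltac:(by move: hcnt; rewrite (negbTE iS) /= add0n)).
  exists (xv m i.+1 :: s); split.
  + rewrite /= hp !inordK //; clia.
  + done.
  + apply/andP; split; last exact: hu.
    apply: (notin_level (lo := 2 * i)) => //=; last by rewrite inordK //; clia.
    move=> y; rewrite inE => /orP [/eqP -> /=|hy]; first by rewrite !inordK //; clia.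
    by move/allP: hlev => /(_ y hy); clia.
  + apply/andP; split; first by rewrite /= inordK //; clia.
    by apply: sub_all hlev => y /=; clia.
  + rewrite !pc_cons /= !inordK //; [|clia].
    split.
      rewrite /= hcu andbT; apply/negP => hd.
      move/allP: hcq => /(_ i hd) /andP [_]; rewrite hi; clia.
    rewrite /= /Qc iS hi leqnn /=.
    apply/allP => d hd; move/allP: hcq => /(_ d hd) /andP [-> /=].
    case: ifP => _ //; clia.
Qed.

Lemma count_bound m (S : seq nat) : uniq S -> size S = m.+1 ->
  count (fun j => j \in S) (iota 0 (NN m)) <=
  size [seq c <- iota 0 m.+1 | (NN m + 2 * c \notin S) && (NN m + 2 * c + 1 \notin S)].
Proof.
move=> hS hsz.
set fr := fun c => (NN m + 2 * c \notin S) && (NN m + 2 * c + 1 \notin S).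
set B := [seq j <- iota 0 (NN m) | j \in S].
set Cb := [seq c <- iota 0 m.+1 | ~~ fr c].
set g := fun c => if NN m + 2 * c \in S then NN m + 2 * c else NN m + 2 * c + 1.
have hc := count_predC fr (iota 0 m.+1).
rewrite size_iota in hc.
have hginj : injective g.
  move=> a b; rewrite /g; do 2 case: ifP => _; lia.
have hu : uniq (B ++ map g Cb).
  rewrite cat_uniq filter_uniq ?iota_uniq // (map_inj_uniq hginj) filter_uniq ?iota_uniq // andbT /=.
  apply/hasP => [[z /mapP [c _ ->]]]; rewrite mem_filter mem_iota /g; case: ifP => _ /andP [_]; lia.
have hsub : {subset B ++ map g Cb <= S}.
  move=> z; rewrite mem_cat => /orP [|/mapP [c]]; first by rewrite mem_filter => /andP [].
  rewrite mem_filter /fr negb_and !negbK => /andP [hnf _] ->; rewrite /g.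
  by case: ifP => // h; move: hnf; rewrite h.
have := uniq_leq_size hu hsub.
rewrite size_cat size_map !size_filter hsz.
rewrite -/(count fr _) in hc *.
have -> : count (fun c => ~~ fr c) (iota 0 m.+1) = count (predC fr) (iota 0 m.+1) by [].
lia.
Qed.

Theorem mainTheorem16 :
  forall k : nat, 0 < k ->
  exists (V : finType) (E : rel V) (col : V -> V -> nat) (u v : V),
    u != v /\
    (* (I) *)
    (forall S : seq nat, uniq S -> size S = k ->
       exists p : seq V, [/\ is_dpath E u v p, rainbow col p &
                            all (fun c => c \notin S) (path_colours col p)]) /\
    (* (II) *)
    (forall p q : seq V, is_dpath E u v p -> rainbow col p ->
       is_dpath E u v q -> rainbow col q ->
       has (fun e => e \in path_edges q) (path_edges p)).
Proof.
case=> [|m] // _.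
exists (V m), (@E m), (@col m), (xv m 0), (xv m (NN m)); split; [|split].
- apply/eqP => [[]] /(congr1 val); rewrite /= !inordK //; lia.
- move=> S hS hsz.
  set A := [seq c <- iota 0 m.+1 | (NN m + 2 * c \notin S) && (NN m + 2 * c + 1 \notin S)].
  have [s [hp hl hu _ [hcu hcq]]] := @build m S (NN m) 0 A (add0n _)
    (filter_uniq _ (iota_uniq _ _))
    (fun c h => ltac:(by move: h; rewrite mem_filter mem_iota add0n => /andP [/andP [-> ->] /andP [_ ->]])) (count_bound hS hsz).
  exists (xv m 0 :: s); split.
  + by rewrite /= eqxx hl eqxx hp; exact: hu.
  + exact: hcu.
  + by apply: sub_all hcq => c /andP [].
- exact: partII.
Qed.
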